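(* Let $\mathfrak d$ be a delta operator and let $\mathcal Z=(z_i)_{i\ge0}$, $\mathcal Z'=(z'_i)_{i\ge0}$ be grids such that, for a given $k\in\mathbb N$, $z_k\neq z'_k$ and $z_i=z'_i$ for all $i\neq k$. Then $t_n(x;\mathfrak d,\mathcal Z')=t_n(x;\mathfrak d,\mathcal Z)$ for $n\le k$, and for $n>k$, $$t_n(x;\mathfrak d,\mathcal Z')=t_n(x;\mathfrak d,\mathcal Z)-\binom nk\,t_{n-k}(z'_k;\mathfrak d,\mathcal Z^{(k)})\,t_k(x;\mathfrak d,\mathcal Z).$$
   Context: $\mathbb K$ is a field of characteristic zero; a delta operator is a linear operator $\mathfrak d$ on $\mathbb K[x]$ commuting with all shifts $E_a:f(x)\mapsto f(x+a)$ and with $\mathfrak d(x)$ a nonzero constant. $\varepsilon_z$ is evaluation at $z$. A grid is a sequence in $\mathbb K$; $\mathcal Z^{(k)}=(z_{i+k})_{i\ge0}$. $t_n(x;\mathfrak d,\mathcal Z)$ denotes the $n$-th term of the generalized Gončarov basis associated with $(\mathfrak d,\mathcal Z)$, i.e. the unique sequence $(t_n)_{n\ge0}$ with $\deg t_n=n$ and $\varepsilon_{z_i}(\mathfrak d^{\,i}(t_n))=n!\,\delta_{i,n}$ for all $i,n$. *)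

(* Defs.v *)
From HB Require Import structures.
From mathcomp Require Import all_boot all_order all_algebra.
Set Implicit Arguments. Unset Strict Implicit. Unset Printing Implicit Defensive.
Import GRing.Theory.
Local Open Scope ring_scope.

Definition shift (K : fieldType) (a : K) (p : {poly K}) : {poly K} :=
  p \Po ('X + a%:P).

Definition is_delta_operator (K : fieldType) (d : {poly K} -> {poly K}) : Prop :=
  [/\ (forall (a : K) (p q : {poly K}), d (a *: p + q) = a *: d p + d q),
      (forall (a : K) (p : {poly K}), d (shift a p) = shift a (d p)) &
      exists2 c : K, c != 0 & d 'X = c%:P].

Definition grid_shift (K : fieldType) (z : nat -> K) (k : nat) : nat -> K :=
  fun i => z (i + k)%N.

Definition is_goncarov_basis (K : fieldType) (d : {poly K} -> {poly K})
    (z : nat -> K) (t : nat -> {poly K}) : Prop :=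
  (forall n, size (t n) = n.+1) /\
  (forall i n, (iter i d (t n)).[z i] = (n`!)%:R * (i == n)%:R).

(* Main.v *)
Require Import Defs.
From HB Require Import structures.
From mathcomp Require Import all_boot all_order all_algebra.
From mathcomp Require Import ring.
Import GRing.Theory.
Local Open Scope ring_scope.
Set Implicit Arguments. Unset Strict Implicit.

Definition linP (K : fieldType) (d : {poly K} -> {poly K}) :=
  forall (a : K) (p q : {poly K}), d (a *: p + q) = a *: d p + d q.

Lemma lin0 (K : fieldType) d : @linP K d -> d 0 = 0.
Proof.
move=> h; have := h 1 0 0; rewrite !scale1r addr0 => e.
by apply: (@addrI _ (d 0)); rewrite addr0 -e.
Qed.

Lemma linZ (K : fieldType) d : @linP K d -> forall a p, d (a *: p) = a *: d p.
Proof. by move=> h a p; have := h a p 0; rewrite addr0 lin0 // addr0. Qed.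

Lemma linD (K : fieldType) d : @linP K d -> forall p q, d (p + q) = d p + d q.
Proof. by move=> h p q; have := h 1 p q; rewrite !scale1r. Qed.

Lemma iterL (K : fieldType) d : @linP K d -> forall j, @linP K (iter j d : {poly K} -> {poly K}).
Proof.
move=> h; elim=> [|j IH] a p q //=.
by rewrite IH h.
Qed.

Lemma linB (K : fieldType) d : @linP K d -> forall p q, d (p - q) = d p - d q.
Proof.
move=> h p q; rewrite linD // -scaleN1r linZ //; by rewrite scaleN1r.
Qed.

Lemma lin_sum (K : fieldType) d : @linP K d -> forall (m : nat) (F : 'I_m -> {poly K}),
  d (\sum_(i < m) F i) = \sum_(i < m) d (F i).
Proof.
move=> h; elim=> [|m IH] F; first by rewrite !big_ord0 lin0.
by rewrite !big_ord_recr /= linD // IH.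
Qed.

Lemma char0_nat (K : fieldType) (hK : [pchar K] =i pred0) n : (n%:R == 0 :> K) = (n == 0%N).
Proof. by move/pcharf0P: hK. Qed.

Lemma natr_inj0 (K : fieldType) (hK : [pchar K] =i pred0) : injective (fun n : nat => n%:R : K).
Proof.
move=> m n /= e.
wlog le: m n e / (m <= n)%N.
  by move=> W; case: (leqP m n) => [|/ltnW] H; [|apply/esym]; apply: W.
move/eqP: e; rewrite eq_sym -subr_eq0 -natrB // char0_nat // subn_eq0 => le2.
by apply/eqP; rewrite eqn_leq le le2.
Qed.

Lemma poly_zero_all (K : fieldType) (hK : [pchar K] =i pred0) (p : {poly K}) :
  (forall a, p.[a] = 0) -> p = 0.
Proof.
move=> H; apply/eqP; apply/negPn/negP => nz.
suff: (size [seq i%:R : K | i <- iota 0 (size p)] < size p)%N.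
  by rewrite size_map size_iota ltnn.
apply: max_poly_roots nz _ _.
  by apply/allP => x _; apply/rootP.
by rewrite map_inj_uniq ?iota_uniq //; apply: natr_inj0.
Qed.

Definition shiftP (K : fieldType) (d : {poly K} -> {poly K}) :=
  forall (a : K) (p : {poly K}), d (shift a p) = shift a (d p).

Lemma d1 (K : fieldType) d (c : K) : @linP K d -> @shiftP K d -> d 'X = c%:P -> d 1 = 0.
Proof.
move=> hl hs hX.
have := hs 1 'X; rewrite /shift comp_polyX hX comp_polyC.
have -> : 'X + 1%:P = 1 *: (1 : {poly K}) + 'X by rewrite scale1r addrC.
rewrite hl hX scale1r => e.
by apply: (@addIr _ c%:P); rewrite add0r.
Qed.

Lemma dXn (K : fieldType) (hK : [pchar K] =i pred0) d (c : K) : @linP K d -> @shiftP K d -> d 'X = c%:P ->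
  forall n, (size (d 'X^n) <= n)%N.
Proof.
move=> hl hs hX n.
pose e j := (d 'X^j).[0].
pose r := \poly_(i < n) ('C(n,i)%:R * e (n - i)%N).
suff -> : d 'X^n = r by apply: size_poly.
apply/eqP; rewrite -subr_eq0; apply/eqP; apply: poly_zero_all => // a.
rewrite hornerD hornerN; apply/eqP; rewrite subr_eq0; apply/eqP.
have -> : (d 'X^n).[a] = (shift a (d 'X^n)).[0].
  by rewrite /shift horner_comp hornerD hornerX hornerC add0r.
rewrite -hs /shift comp_Xn_poly exprDn.
have -> : \sum_(i < n.+1) 'X ^+ (n - i) * a%:P ^+ i *+ 'C(n, i) =
          \sum_(i < n.+1) ('C(n, i)%:R * a ^+ i) *: 'X^(n - i) :> {poly K}.
  apply: eq_bigr => i _.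
  by rewrite -rmorphXn /= [_ * (_)%:P]mulrC mul_polyC -scaler_nat scalerA.
rewrite (lin_sum hl) horner_sum horner_poly big_ord_recr /=.
rewrite (linZ hl) hornerZ subnn expr0 (d1 hl hs hX) horner0 mulr0 addr0.
apply: eq_bigr => i _; rewrite (linZ hl) hornerZ /e.
by rewrite -!mulrA [a ^+ i * _]mulrC.
Qed.

Lemma dlow (K : fieldType) (hK : [pchar K] =i pred0) d (c : K) : @linP K d -> @shiftP K d -> d 'X = c%:P ->
  forall m (p : {poly K}), (size p <= m.+1)%N -> (size (d p) <= m)%N.
Proof.
move=> hl hs hX m p hp.
rewrite -[p]coefK poly_def (lin_sum hl).
apply: (big_ind (fun q : {poly K} => size q <= m)%N).
- by rewrite size_poly0.
- by move=> x y hx hy; apply: leq_trans (size_polyD _ _) _; rewrite geq_max hx hy.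
move=> i _; rewrite (linZ hl); apply: leq_trans (size_scale_leq _ _) _.
apply: leq_trans (dXn hK hl hs hX i) _.
by rewrite -ltnS; apply: leq_trans (ltn_ord i) hp.
Qed.

Lemma iter_low (K : fieldType) (hK : [pchar K] =i pred0) d (c : K) : @linP K d -> @shiftP K d -> d 'X = c%:P ->
  forall j m (p : {poly K}), (size p <= m + j)%N -> (size (iter j d p) <= m)%N.
Proof.
move=> hl hs hX; elim=> [|j IH] m p hp /=; first by rewrite addn0 in hp.
apply: (dlow hK hl hs hX); apply: IH; by rewrite addnS -addSn in hp.
Qed.

Lemma fact_neq0 (K : fieldType) (hK : [pchar K] =i pred0) n : (n`!)%:R != 0 :> K.
Proof. by rewrite char0_nat // -lt0n fact_gt0. Qed.

Lemma ustep (K : fieldType) (hK : [pchar K] =i pred0) d (c : K) : @linP K d -> @shiftP K d -> d 'X = c%:P ->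
  forall w b, is_goncarov_basis d w b ->
  forall m (u : {poly K}), (size u <= m.+1)%N -> (iter m d u).[w m] = 0 -> (size u <= m)%N.
Proof.
move=> hl hs hX w b [hsz hev] m u hu hm.
have hl0 : lead_coef (b m) != 0 by rewrite lead_coef_eq0 -size_poly_eq0 hsz.
pose cc := u`_m / lead_coef (b m).
pose u' := u - cc *: b m.
have hu' : (size u' <= m)%N.
  apply/leq_sizeP => j hj; rewrite coefB coefZ.
  case: (ltngtP j m) hj => // [hjm _| ejm _].
    have /leq_sizeP -> := hu; last by [].
    have /leq_sizeP -> := (eq_leq (hsz m)); last by [].
    by rewrite mulr0 subrr.
  rewrite ejm /cc -[(b m)`_m]/((b m)`_(m.+1.-1)) -(hsz m) -lead_coefE divfK // subrr.
  by [].
have e : u = cc *: b m + u' by rewrite /u' addrC subrK.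
have hz : iter m d u' = 0.
  apply/eqP; rewrite -size_poly_eq0 -leqn0.
  by apply: (iter_low hK hl hs hX); rewrite add0n.
move: hm; rewrite {1}e (iterL hl) hz addr0 hornerZ hev eqxx mulr1 => /eqP.
rewrite mulf_eq0 (negbTE (fact_neq0 hK m)) orbF => /eqP cc0.
by move: hu'; rewrite /u' cc0 scale0r subr0.
Qed.

Lemma uniq0 (K : fieldType) (hK : [pchar K] =i pred0) d (c : K) : @linP K d -> @shiftP K d -> d 'X = c%:P ->
  forall w b, is_goncarov_basis d w b ->
  forall m (u : {poly K}), (size u <= m)%N -> (forall j, (j < m)%N -> (iter j d u).[w j] = 0) -> u = 0.
Proof.
move=> hl hs hX w b hb; elim=> [|m IH] u hu hj.
  by apply/eqP; rewrite -size_poly_eq0 -leqn0.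
apply: IH => [|j hjm]; last by apply: hj; apply: ltnW.
by apply: (ustep hK hl hs hX hb) => //; apply: hj.
Qed.

Lemma eq_basis (K : fieldType) (hK : [pchar K] =i pred0) d (c : K) : @linP K d -> @shiftP K d -> d 'X = c%:P ->
  forall w b, is_goncarov_basis d w b ->
  forall n (s : {poly K}), (size s <= n.+1)%N ->
  (forall j, (iter j d s).[w j] = (n`!)%:R * (j == n)%:R) -> b n = s.
Proof.
move=> hl hs hX w b hb n s hsz hj; apply/eqP; rewrite -subr_eq0; apply/eqP.
apply: (uniq0 hK hl hs hX hb (m := n.+1)).
  apply: leq_trans (size_polyD _ _) _; rewrite size_polyN geq_max hsz.
  by case: hb => -> _; rewrite leqnn.
move=> j _; rewrite (linB (iterL hl j)) hornerD hornerN hj.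
by case: hb => _ ->; rewrite subrr.
Qed.

Theorem mainTheorem12 (K : fieldType) (hK : [pchar K] =i pred0)
  (d : {poly K} -> {poly K}) (hd : is_delta_operator d)
  (z z' : nat -> K) (k : nat)
  (hzk : z k != z' k) (hz : forall i, i != k -> z i = z' i)
  (t t' tk : nat -> {poly K})
  (ht : is_goncarov_basis d z t) (ht' : is_goncarov_basis d z' t')
  (htk : is_goncarov_basis d (grid_shift z k) tk) :
  (forall n, (n <= k)%N -> t' n = t n) /\
  (forall n, (k < n)%N ->
     t' n = t n - ('C(n, k))%:R * (tk (n - k)%N).[z' k] *: t k).
Proof.
case: hd => hl hs [c _ hX].
have hl' : linP d by [].
have hs' : shiftP d by [].
have [tsz tev] := ht.
have [tksz tkev] := htk.
have tkk : forall x, (iter k d (t k)).[x] = (k`!)%:R.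
  move=> x.
  have hsz1 : (size (iter k d (t k)) <= 1)%N.
    by apply: (iter_low hK hl' hs' hX); rewrite tsz add1n.
  rewrite (size1_polyC hsz1) hornerC.
  by have := tev k k; rewrite {1}(size1_polyC hsz1) hornerC eqxx mulr1.
have P1 : forall n, (n <= k)%N -> forall j,
    (iter j d (t n)).[z' j] = (n`!)%:R * (j == n)%:R.
  move=> n hn j.
  case: (eqVneq j k) => [->|hjk]; last by rewrite -hz // tev.
  case: (ltngtP n k) hn => // [hnk _|-> _]; last by rewrite tkk mulr1.
  have -> : iter k d (t n) = 0.
    apply/eqP; rewrite -size_poly_eq0 -leqn0.
    by apply: (iter_low hK hl' hs' hX); rewrite tsz add0n.
  by rewrite horner0 mulr0.
split.
  move=> n hn; apply/esym; apply/eqP; rewrite eq_sym; apply/eqP.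
  apply: (eq_basis hK hl' hs' hX ht' (n := n)); first by rewrite tsz.
  exact: P1.
have key : forall n, (k <= n)%N ->
    (n - k)`!%:R *: iter k d (t n) = n`!%:R *: tk (n - k)%N.
  move=> n hkn; apply/eqP; rewrite -subr_eq0; apply/eqP.
  apply: (uniq0 hK hl' hs' hX htk (m := (n - k).+1)).
    apply: leq_trans (size_polyD _ _) _; rewrite size_polyN geq_max.
    apply/andP; split.
      apply: leq_trans (size_scale_leq _ _) _.
      by apply: (iter_low hK hl' hs' hX); rewrite tsz addSn subnK.
    by apply: leq_trans (size_scale_leq _ _) _; rewrite tksz.
  move=> j _.
  rewrite (linB (iterL hl' j)) !(linZ (iterL hl' j)) hornerD hornerN !hornerZ.
  rewrite -iterD tkev /grid_shift tev.
  have -> : (j + k == n)%N = (j == n - k)%N.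
    apply/eqP/eqP => [<-|->]; first by rewrite addnK.
    by rewrite subnK.
  by rewrite mulrCA subrr.
move=> n hkn; apply: (eq_basis hK hl' hs' hX ht' (n := n)).
  apply: leq_trans (size_polyD _ _) _; rewrite size_polyN geq_max tsz leqnn /=.
  by apply: leq_trans (size_scale_leq _ _) _; rewrite tsz ltnW.
move=> j.
rewrite (linB (iterL hl' j)) (linZ (iterL hl' j)) hornerD hornerN hornerZ.
case: (eqVneq j k) => [->|hjk]; last first.
  by rewrite -hz // !tev (negbTE hjk) !mulr0 subr0.
rewrite tkk (ltn_eqF hkn) mulr0.
have hk := key n (ltnW hkn).
have := congr1 (fun p => p.[z' k]) hk; rewrite /= !hornerZ => e.
apply: (mulfI (fact_neq0 hK (n - k))).
rewrite mulr0 mulrBr e.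
rewrite -(bin_fact (ltnW hkn)) !natrM.
ring.
Qed.
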